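(* Let $X_n,Y_n,Z_n,W_n$ be chosen as real numbers with $Q_n(1)=1$, $Q_n'(1)=1$, $Q_n(s^\nu)=s^\nu$, $Q_n'(s^\nu)=1$ and with $(X_n-1)/s^\nu$, $Y_n/s^\nu$, $(Z_n-1)/s^\nu$, $W_n/s^\nu$ converging as $s\to0^+$ to $\frac{d_1(d_1-3)(d_n-1)}{(d_1-1)^2d_n}$, $\frac{2d_1(d_n-1)}{(d_1-1)d_n}$, $0$, $\frac{d_n-1}{d_n}$ respectively. Let $\varphi(z)=s^\nu/z$ and $\widehat Q_n=\varphi\circ Q_n\circ\varphi^{-1}$. Then, as $s\to0^+$, $Q_n\to h_{d_1}$ and $\widehat Q_n\to h_{d_n}$ locally uniformly on $\widehat{\mathbb{C}}\setminus\{0\}$, where $h_d(z)=\frac{dz^d}{(d-1)z^d+1}$.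
   Context: $n\ge3$ odd, $d_1,\dots,d_n$ positive integers with $\sum1/d_i<1$, $d_{\max}=\max_id_i$, $D_i=d_i+d_{i+1}$, $\tau=\bigl(d_1d_nd_{\max}^{2(d_1-d_n)/d_1}\bigr)^{1/\sum_{i=1}^{n-1}(d_n/d_i)}$, $\nu=\frac{d_n}{d_n-1}\sum_{i=1}^{n-1}\frac1{d_i}$, $b_1=(d_{\max}^2\tau s)^{1/d_1}$, $b_i=(\tau s)^{1/d_i}b_{i-1}$, and $Q_n(z)=\frac{d_1z^{d_n}}{(d_1-1)X_nz^{d_1}+Y_nz+Z_n}\prod_{i=1}^{n-1}(z^{D_i}-b_i^{D_i})^{(-1)^{i-1}}+W_n$. Such $X_n,\dots,W_n$ exist for small $s$. *)

(* Defs.v *)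
From Stdlib Require Import Reals Lra.
Open Scope R_scope.

Definition C := (R * R)%type.
Definition RC (x : R) : C := (x, 0).
Definition C0 : C := (0, 0).
Definition C1 : C := (1, 0).
Definition Cadd (u v : C) : C := (fst u + fst v, snd u + snd v).
Definition Csub (u v : C) : C := (fst u - fst v, snd u - snd v).
Definition Cmul (u v : C) : C :=
  (fst u * fst v - snd u * snd v, fst u * snd v + snd u * fst v).
Fixpoint Cpow (u : C) (k : nat) : C :=
  match k with O => C1 | S k' => Cmul u (Cpow u k') end.
Definition Cnorm (u : C) : R := sqrt (fst u ^ 2 + snd u ^ 2).
Definition Cinv (u : C) : C :=
  let r := fst u ^ 2 + snd u ^ 2 in (fst u / r, - snd u / r).

(** Points of the Riemann sphere in homogeneous coordinates [a : b]
    (value a/b; [a:0] = infinity); chordal distance between them. *)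
Definition chord (p q : C * C) : R :=
  let (a, b) := p in let (c, d) := q in
  Cnorm (Csub (Cmul a d) (Cmul b c)) /
  (sqrt (Cnorm a ^ 2 + Cnorm b ^ 2) * sqrt (Cnorm c ^ 2 + Cnorm d ^ 2)).

Fixpoint sum1 (f : nat -> R) (m : nat) : R :=
  match m with O => 0 | S k => sum1 f k + f (S k) end.
Fixpoint prodC1 (f : nat -> C) (m : nat) : C :=
  match m with O => C1 | S k => Cmul (prodC1 f k) (f (S k)) end.
Fixpoint max1 (f : nat -> nat) (m : nat) : nat :=
  match m with O => 0%nat | S k => Nat.max (max1 f k) (f (S k)) end.

Definition dmax (d : nat -> nat) (n : nat) : R := INR (max1 d n).
Definition DD (d : nat -> nat) (i : nat) : nat := (d i + d (S i))%nat.

Definition tau (d : nat -> nat) (n : nat) : R :=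
  Rpower (INR (d 1%nat) * INR (d n) *
          Rpower (dmax d n) (2 * (INR (d 1%nat) - INR (d n)) / INR (d 1%nat)))
         (1 / sum1 (fun i => INR (d n) / INR (d i)) (n - 1)).

Definition nu (d : nat -> nat) (n : nat) : R :=
  INR (d n) / (INR (d n) - 1) * sum1 (fun i => 1 / INR (d i)) (n - 1).

Fixpoint bseq (d : nat -> nat) (n : nat) (s : R) (i : nat) : R :=
  match i with
  | O => 1
  | S k =>
      match k with
      | O => Rpower (dmax d n ^ 2 * tau d n * s) (1 / INR (d 1%nat))
      | S _ => Rpower (tau d n * s) (1 / INR (d i)) * bseq d n s k
      end
  end.

Definition fac (d : nat -> nat) (n : nat) (s : R) (i : nat) (z : C) : C :=
  Csub (Cpow z (DD d i)) (RC (bseq d n s i ^ DD d i)).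

(** Q_n = Qnum / Qden, where (since (-1)^(i-1) = 1 iff i odd):
    Qden = ((d1-1) X z^d1 + Y z + Z) * prod_{i<=n-1, i even} fac_i
    Qnum = d1 z^dn * prod_{i<=n-1, i odd} fac_i + W * Qden *)
Definition Qden (d : nat -> nat) (n : nat) (X Y Z : R -> R) (s : R) (z : C) : C :=
  Cmul (Cadd (Cadd (Cmul (RC ((INR (d 1%nat) - 1) * X s)) (Cpow z (d 1%nat)))
                   (Cmul (RC (Y s)) z))
             (RC (Z s)))
       (prodC1 (fun i => if Nat.even i then fac d n s i z else C1) (n - 1)).

Definition Qnum (d : nat -> nat) (n : nat) (X Y Z W : R -> R) (s : R) (z : C) : C :=
  Cadd (Cmul (RC (INR (d 1%nat)))
             (Cmul (Cpow z (d n))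
                   (prodC1 (fun i => if Nat.odd i then fac d n s i z else C1) (n - 1))))
       (Cmul (RC (W s)) (Qden d n X Y Z s z)).

Definition Qhom d n X Y Z W s (z : C) : C * C :=
  (Qnum d n X Y Z W s z, Qden d n X Y Z s z).

(** Q_n restricted to the real line (real coefficients) *)
Definition Qreal d n X Y Z W s (x : R) : R :=
  fst (Qnum d n X Y Z W s (RC x)) / fst (Qden d n X Y Z s (RC x)).

(** hat Q_n = phi o Q_n o phi^{-1}, phi(z) = s^nu / z (phi^{-1} = phi):
    for w = s^nu / z and Q_n(w) = [N : M], hat Q_n(z) = [s^nu M : N]. *)
Definition Qhat_hom d n X Y Z W s (z : C) : C * C :=
  let t := Rpower s (nu d n) in
  let w := Cmul (RC t) (Cinv z) in
  (Cmul (RC t) (Qden d n X Y Z s w), Qnum d n X Y Z W s w).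

Definition hhom (k : nat) (z : C) : C * C :=
  (Cmul (RC (INR k)) (Cpow z k),
   Cadd (Cmul (RC (INR k - 1)) (Cpow z k)) C1).

(** Compact subsets of Chat\{0} are exactly the closed
    subsets of {|z| >= r} u {oo}; by continuity of the extended maps it
    suffices to take the sup over finite z with |z| >= r, omitting the
    (finitely many) common zeros of numerator and denominator. *)
Definition locunif_conv (F : R -> C -> C * C) (G : C -> C * C) : Prop :=
  forall r, 0 < r -> forall eps, 0 < eps ->
  exists delta, 0 < delta /\
  forall s, 0 < s < delta -> forall z, r <= Cnorm z ->
    ~ (fst (F s z) = C0 /\ snd (F s z) = C0) ->
    chord (F s z) (G z) < eps.

Definition lim0p (f : R -> R) (L : R) : Prop :=
  forall eps, 0 < eps -> exists delta, 0 < delta /\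
  forall s, 0 < s < delta -> Rabs (f s - L) < eps.

(* Main.v *)
From Stdlib Require Import Reals Lra Lia.
From Coquelicot Require Import Coquelicot.
From Stdlib Require Import Ring Field.
Require Import Defs.
Open Scope R_scope.

Lemma Cmod_le_N (a b : Complex.C) : Cmod a <= sqrt (Cmod a ^ 2 + Cmod b ^ 2).
Proof.
  rewrite <- (sqrt_pow2 (Cmod a)) at 1 by apply Cmod_ge_0.
  apply sqrt_le_1_alt. pose proof (pow2_ge_0 (Cmod b)). lra.
Qed.

Lemma N_ge0 (a b : Complex.C) : 0 <= sqrt (Cmod a ^ 2 + Cmod b ^ 2).
Proof. apply sqrt_pos. Qed.

Lemma chord_bound (a b c d : Complex.C) :
  chord (a, b) (c, d) <=
  (Cmod (a - c)%C + Cmod (b - d)%C) / sqrt (Cmod c ^ 2 + Cmod d ^ 2).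
Proof.
  unfold chord. change (Cnorm ?x) with (Cmod x).
  set (Nab := sqrt (Cmod a ^ 2 + Cmod b ^ 2)).
  set (Ncd := sqrt (Cmod c ^ 2 + Cmod d ^ 2)).
  change (Csub (Cmul a d) (Cmul b c)) with (a * d - b * c)%C.
  assert (Hab : 0 <= Nab) by apply sqrt_pos.
  assert (Hcd : 0 <= Ncd) by apply sqrt_pos.
  assert (Ha : Cmod a <= Nab) by apply Cmod_le_N.
  assert (Hb : Cmod b <= Nab).
  { unfold Nab. rewrite Rplus_comm. apply Cmod_le_N. }
  assert (E : (a * d - b * c = a * (d - b) + (- b) * (c - a))%C) by ring.
  assert (K : Cmod (a * d - b * c)%C <= Nab * (Cmod (a - c)%C + Cmod (b - d)%C)).
  { rewrite E. eapply Rle_trans. apply Cmod_triangle.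
    rewrite !Cmod_mult, Cmod_opp.
    assert (E1 : Cmod (d - b)%C = Cmod (b - d)%C).
    { rewrite <- Cmod_opp. f_equal. ring. }
    assert (E2 : Cmod (c - a)%C = Cmod (a - c)%C).
    { rewrite <- Cmod_opp. f_equal. ring. }
    rewrite E1, E2.
    pose proof (Cmod_ge_0 (a - c)%C). pose proof (Cmod_ge_0 (b - d)%C).
    nra. }
  assert (S0 : 0 <= Cmod (a - c)%C + Cmod (b - d)%C).
  { pose proof (Cmod_ge_0 (a - c)%C). pose proof (Cmod_ge_0 (b - d)%C). lra. }
  assert (Pinv : forall x, 0 <= x -> 0 <= / x).
  { intros x Hx. destruct (Req_dec x 0) as [->|]. rewrite Rinv_0; lra.
    apply Rlt_le, Rinv_0_lt_compat; lra. }
  destruct (Req_dec Nab 0) as [Z1|Z1].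
  { rewrite Z1, Rmult_0_l, Rdiv_0_r. unfold Rdiv. apply Rmult_le_pos; auto. }
  unfold Rdiv. rewrite Rinv_mult, <- Rmult_assoc.
  apply Rmult_le_compat_r; auto.
  replace (Cmod (a - c)%C + Cmod (b - d)%C) with
     (Nab * (Cmod (a - c)%C + Cmod (b - d)%C) * / Nab) by (field; auto).
  apply Rmult_le_compat_r; auto.
Qed.

Lemma chord_scale (l a b : Complex.C) (q : Complex.C * Complex.C) :
  l <> RtoC 0 -> chord ((l * a)%C, (l * b)%C) q = chord (a, b) q.
Proof.
  intros Hl. destruct q as [c d]. unfold chord. change (Cnorm ?x) with (Cmod x).
  change (Csub (Cmul ?x ?y) (Cmul ?u ?v)) with (x * y - u * v)%C.
  replace (l * a * d - l * b * c)%C with (l * (a * d - b * c))%C by ring.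
  rewrite !Cmod_mult.
  assert (Hp : 0 < Cmod l) by (apply Cmod_gt_0; auto).
  replace ((Cmod l * Cmod a) ^ 2 + (Cmod l * Cmod b) ^ 2) with
    (Cmod l ^ 2 * (Cmod a ^ 2 + Cmod b ^ 2)) by ring.
  rewrite sqrt_mult_alt by (apply pow2_ge_0).
  rewrite sqrt_pow2 by lra.
  destruct (Req_dec (sqrt (Cmod a ^ 2 + Cmod b ^ 2) * sqrt (Cmod c ^ 2 + Cmod d ^ 2)) 0) as [Z|Z].
  { rewrite Rmult_assoc, Z, Rmult_0_r, !Rdiv_0_r. reflexivity. }
  field. split; [|split]; [intro E; apply Z; rewrite E; ring|intro E; apply Z; rewrite E; ring|lra].
Qed.

Lemma x_le_1_pow (x : R) (k : nat) : (1 <= k)%nat -> 0 <= x -> x <= 1 + x ^ k.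
Proof.
  intros Hk Hx. destruct (Rle_dec x 1). pose proof (pow_le x k Hx). lra.
  assert (x ^ 1 <= x ^ k) by (apply Rle_pow; lra || lia). simpl in H. lra.
Qed.

Lemma target_N (k : nat) (z : Complex.C) : (1 <= k)%nat ->
  1/2 <= sqrt (Cmod (RtoC (INR k) * z ^ k)%C ^ 2 + Cmod (RtoC (INR k - 1) * z ^ k + 1)%C ^ 2)
  /\ Cmod z ^ k <= sqrt (Cmod (RtoC (INR k) * z ^ k)%C ^ 2 + Cmod (RtoC (INR k - 1) * z ^ k + 1)%C ^ 2).
Proof.
  intros Hk.
  set (c := (RtoC (INR k) * z ^ k)%C). set (d := (RtoC (INR k - 1) * z ^ k + 1)%C).
  assert (Hc : Cmod c <= sqrt (Cmod c ^ 2 + Cmod d ^ 2)) by apply Cmod_le_N.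
  assert (Hd : Cmod d <= sqrt (Cmod c ^ 2 + Cmod d ^ 2)).
  { rewrite Rplus_comm. apply Cmod_le_N. }
  assert (Kp : 1 <= INR k) by (apply (le_INR 1); auto).
  assert (E : (RtoC 1 = d - RtoC ((INR k - 1) / INR k) * c)%C).
  { unfold c, d. rewrite RtoC_div by lra. rewrite RtoC_minus. field.
    intro H. apply RtoC_inj in H. lra. }
  split.
  - assert (1 <= Cmod d + Cmod c).
    { rewrite <- Cmod_1 at 1. rewrite E.
      eapply Rle_trans. apply Cmod_triangle. rewrite Cmod_opp, Cmod_mult, Cmod_R.
      assert (0 <= (INR k - 1) / INR k <= 1).
      { replace ((INR k - 1) / INR k) with (1 - / INR k) by (field; lra).
        assert (0 < / INR k) by (apply Rinv_0_lt_compat; lra).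
        assert (/ INR k <= 1). { rewrite <- Rinv_1. apply Rinv_le_contravar; lra. }
        lra. }
      rewrite Rabs_pos_eq by lra. pose proof (Cmod_ge_0 c).
      set (r := (INR k - 1) / INR k) in *. nra. }
    lra.
  - eapply Rle_trans; [|apply Hc]. unfold c. rewrite Cmod_mult, Cmod_R, Cmod_pow.
    rewrite Rabs_pos_eq by lra. pose proof (pow_le (Cmod z) k (Cmod_ge_0 z)). nra.
Qed.

Lemma approx_chord (k : nat) (z a b : Complex.C) (eta : R) :
  (1 <= k)%nat -> 0 <= eta ->
  Cmod (a - RtoC (INR k) * z ^ k)%C <= eta * (Cmod z ^ k + Cmod z + 1) ->
  Cmod (b - (RtoC (INR k - 1) * z ^ k + 1))%C <= eta * (Cmod z ^ k + Cmod z + 1) ->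
  chord (a, b) (hhom k z) <= 12 * eta.
Proof.
  intros Hk He Ha Hb.
  change (hhom k z) with ((RtoC (INR k) * z ^ k)%C, (RtoC (INR k - 1) * z ^ k + 1)%C).
  eapply Rle_trans. apply chord_bound.
  destruct (target_N k z Hk) as [N1 N2].
  set (N := sqrt _) in *.
  pose proof (x_le_1_pow (Cmod z) k Hk (Cmod_ge_0 z)).
  apply Rmult_le_reg_r with N. lra.
  unfold Rdiv. rewrite Rmult_assoc, Rinv_l, Rmult_1_r by lra.
  nra.
Qed.

Ltac ceq := match goal with |- ?a = ?b => change (@eq Complex.C a b) end.

Fixpoint prodR (P : nat -> bool) (x : nat -> R) (m : nat) : R :=
  match m with O => 1 | S k => prodR P x k * (if P (S k) then x (S k) else 1) end.
Fixpoint sumN (P : nat -> bool) (e : nat -> nat) (m : nat) : nat :=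
  match m with O => O | S k => (sumN P e k + (if P (S k) then e (S k) else O))%nat end.

Lemma prod_mul (P : nat -> bool) (F f g : nat -> Complex.C) (m : nat) :
  (forall i, (1 <= i <= m)%nat -> P i = true -> F i = (f i * g i)%C) ->
  prodC1 (fun i => if P i then F i else C1) m =
  (prodC1 (fun i => if P i then f i else C1) m * prodC1 (fun i => if P i then g i else C1) m)%C.
Proof.
  induction m as [|m IH]; intros H.
  - cbn [prodC1]. change C1 with (RtoC 1). change (@eq Complex.C (RtoC 1) (RtoC 1 * RtoC 1)%C). ring.
  - cbn [prodC1]. change (Cmul ?a ?b) with (a * b)%C. ceq. rewrite IH by (intros; apply H; lia || auto).
    destruct (P (S m)) eqn:E.
    + rewrite H by (lia || auto). ring.
    + change C1 with (RtoC 1). ring.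
Qed.

Lemma prod_RtoC (P : nat -> bool) (x : nat -> R) (m : nat) :
  prodC1 (fun i => if P i then RtoC (x i) else C1) m = RtoC (prodR P x m).
Proof.
  induction m as [|m IH]; cbn [prodC1 prodR]. change C1 with (RtoC 1). reflexivity.
  change (Cmul ?a ?b) with (a * b)%C. rewrite IH, RtoC_mult.
  destruct (P (S m)); reflexivity.
Qed.

Lemma prod_pow (P : nat -> bool) (z : Complex.C) (e : nat -> nat) (m : nat) :
  prodC1 (fun i => if P i then (z ^ e i)%C else C1) m = (z ^ sumN P e m)%C.
Proof.
  induction m as [|m IH]; cbn [prodC1 sumN]. reflexivity.
  change (Cmul ?a ?b) with (a * b)%C. rewrite IH, Cpow_add_r. ceq.
  destruct (P (S m)). reflexivity. change C1 with (RtoC 1). simpl. ring.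
Qed.

Lemma prod_bound (P : nat -> bool) (g : nat -> Complex.C) (rho : R) (m : nat) :
  0 <= rho <= 1 ->
  (forall i, (1 <= i <= m)%nat -> P i = true -> Cmod (g i - 1)%C <= rho) ->
  Cmod (prodC1 (fun i => if P i then g i else C1) m - 1)%C <= rho * (2 ^ m - 1).
Proof.
  intros Hr. induction m as [|m IH]; intros H.
  - cbn [prodC1]. replace (C1 - 1)%C with (RtoC 0) by (change C1 with (RtoC 1); ring).
    rewrite Cmod_0. lra.
  - cbn [prodC1]. change (Cmul ?a ?b) with (a * b)%C.
    set (p := prodC1 _ m) in *.
    assert (Hp : Cmod (p - 1)%C <= rho * (2 ^ m - 1)) by (apply IH; intros; apply H; lia || auto).
    assert (Hpm : Cmod p <= 1 + rho * (2 ^ m - 1)).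
    { replace p with ((p - 1) + 1)%C by ring. eapply Rle_trans. apply Cmod_triangle.
      rewrite Cmod_1. lra. }
    assert (G : forall q : Complex.C, Cmod (q - 1)%C <= rho -> Cmod (p * q - 1)%C <= rho * (2 ^ S m - 1)).
    { intros q Hg.
    replace (p * q - 1)%C with (p * (q - 1) + (p - 1))%C by ring.
    eapply Rle_trans. apply Cmod_triangle. rewrite Cmod_mult.
    assert (1 <= 2 ^ m) by (apply pow_R1_Rle; lra).
    pose proof (Cmod_ge_0 p). pose proof (Cmod_ge_0 (q - 1)%C).
    assert (Cmod p * Cmod (q - 1)%C <= (1 + rho * (2 ^ m - 1)) * rho).
    { apply Rmult_le_compat; auto. }
    assert (rho * (rho * (2 ^ m - 1)) <= rho * (2 ^ m - 1)).
    { assert (0 <= rho * (2 ^ m - 1)) by nra. nra. }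
    change (2 ^ S m) with (2 * 2 ^ m). nra. }
    destruct (P (S m)) eqn:E. apply G. apply H; auto; lia.
    apply G. replace (C1 - 1)%C with (RtoC 0) by (change C1 with (RtoC 1); ring).
    rewrite Cmod_0. lra.
Qed.
Definition ev (P : R -> Prop) : Prop :=
  exists delta, 0 < delta /\ forall s, 0 < s < delta -> P s.

Lemma ev_and (P Q : R -> Prop) : ev P -> ev Q -> ev (fun s => P s /\ Q s).
Proof.
  intros [d1 [H1 P1]] [d2 [H2 P2]]. exists (Rmin d1 d2). split.
  apply Rmin_pos; auto. intros s Hs. pose proof (Rmin_l d1 d2). pose proof (Rmin_r d1 d2).
  split; [apply P1|apply P2]; lra.
Qed.

Lemma ev_mono (P Q : R -> Prop) : ev P -> (forall s, 0 < s -> P s -> Q s) -> ev Q.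
Proof.
  intros [d [H1 P1]] H. exists d. split; auto. intros s Hs. apply H. lra. apply P1; auto.
Qed.

Lemma ev_fin (P : nat -> R -> Prop) (m : nat) :
  (forall i, (1 <= i <= m)%nat -> ev (P i)) ->
  ev (fun s => forall i, (1 <= i <= m)%nat -> P i s).
Proof.
  induction m as [|m IH]; intros H.
  - exists 1. split. lra. intros s _ i Hi. lia.
  - apply ev_mono with (P := fun s => (forall i, (1 <= i <= m)%nat -> P i s) /\ P (S m) s).
    apply ev_and. apply IH. intros; apply H; lia. apply H; lia.
    intros s _ [A B] i Hi. destruct (Nat.eq_dec i (S m)) as [->|]. auto. apply A. lia.
Qed.

Lemma exp_small (c c' eps : R) : 0 < c -> 0 < eps -> ev (fun s => exp (c * ln s + c') < eps).
Proof.
  intros Hc He. exists (exp ((ln eps - c') / c)). split. apply exp_pos.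
  intros s [Hs1 Hs2].
  assert (ln s < (ln eps - c') / c).
  { rewrite <- (ln_exp ((ln eps - c') / c)). apply ln_increasing; auto. }
  rewrite <- (exp_ln eps He). apply exp_increasing.
  assert (c * ln s < c * ((ln eps - c') / c)) by (apply Rmult_lt_compat_l; auto).
  replace (c * ((ln eps - c') / c)) with (ln eps - c') in H0 by (field; lra). lra.
Qed.

Lemma lim_near (g : R -> R) (L rho : R) : lim0p g L -> 0 < rho -> ev (fun s => Rabs (g s - L) <= rho).
Proof.
  intros H Hr. destruct (H rho Hr) as [d [Hd P]]. exists d. split; auto.
  intros s Hs. apply Rlt_le, P; auto.
Qed.

Lemma lim_small (f : R -> R) (nu L rho : R) :
  lim0p (fun s => f s / Rpower s nu) L -> 0 < nu -> 0 < rho ->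
  ev (fun s => Rabs (f s) <= rho).
Proof.
  intros H Hn Hr.
  assert (HL : 0 < Rabs L + 1) by (pose proof (Rabs_pos L); lra).
  apply ev_mono with (P := fun s => Rabs (f s / Rpower s nu - L) <= 1 /\
                                   exp (nu * ln s + 0) < rho / (Rabs L + 1)).
  apply ev_and. apply lim_near; auto; lra. apply exp_small; auto.
  apply Rdiv_lt_0_compat; auto.
  intros s Hs [A B]. rewrite Rplus_0_r in B.
  assert (Ht : Rpower s nu = exp (nu * ln s)) by reflexivity.
  rewrite <- Ht in B. assert (Htp : 0 < Rpower s nu) by apply exp_pos.
  set (t := Rpower s nu) in *.
  replace (f s) with (t * (f s / t)) by (field; lra).
  rewrite Rabs_mult, (Rabs_pos_eq t) by lra.
  assert (Rabs (f s / t) <= Rabs L + 1).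
  { replace (f s / t) with ((f s / t - L) + L) by ring.
    eapply Rle_trans. apply Rabs_triang. lra. }
  apply Rlt_le. apply Rlt_le_trans with (rho / (Rabs L + 1) * (Rabs L + 1)).
  2: right; field; lra.
  apply Rle_lt_trans with (t * (Rabs L + 1)).
  apply Rmult_le_compat_l; lra.
  apply Rmult_lt_compat_r; lra.
Qed.

Definition sig (d : nat -> nat) (i : nat) : R := sum1 (fun i => 1 / INR (d i)) i.

Lemma exp_pow' (x : R) (k : nat) : exp x ^ k = exp (INR k * x).
Proof.
  rewrite <- (exp_ln (exp x ^ k)) by (apply pow_lt, exp_pos).
  rewrite ln_pow by apply exp_pos. rewrite ln_exp. reflexivity.
Qed.

Lemma tau_pos d n : 0 < tau d n.
Proof. apply exp_pos. Qed.

Lemma bseq_closed (d : nat -> nat) (n : nat) (s : R) :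
  0 < s -> 0 < dmax d n ->
  forall i, (1 <= i)%nat ->
  bseq d n s i = exp (sig d i * (ln (tau d n) + ln s) + ln (dmax d n ^ 2) / INR (d 1%nat)).
Proof.
  intros Hs Hm i Hi. induction i as [|k IH]. lia.
  destruct k as [|k].
  - cbn [bseq]. unfold Rpower. f_equal.
    assert (H2 : 0 < dmax d n ^ 2) by (apply pow_lt; auto).
    pose proof (tau_pos d n).
    rewrite ln_mult by (auto; apply Rmult_lt_0_compat; auto).
    rewrite ln_mult by auto.
    unfold sig. cbn [sum1]. unfold Rdiv. ring.
  - change (bseq d n s (S (S k))) with (Rpower (tau d n * s) (1 / INR (d (S (S k)))) * bseq d n s (S k)).
    rewrite IH by lia. unfold Rpower. rewrite <- exp_plus. f_equal.
    rewrite ln_mult by (auto; apply tau_pos).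
    unfold sig. cbn [sum1]. ring.
Qed.

Lemma even2 j : Nat.even (2 * j) = true.
Proof. induction j. reflexivity. replace (2 * S j)%nat with (S (S (2 * j))) by lia. exact IHj. Qed.

Lemma odd2 j : Nat.odd (2 * j) = false.
Proof. unfold Nat.odd. rewrite even2. reflexivity. Qed.

Definition bx (d : nat -> nat) (n : nat) (s : R) (i : nat) : R := - (bseq d n s i ^ DD d i).

Lemma expeq (P A B C D : R) : A + B = C + D -> P * - exp A * exp B = P * exp C * - exp D.
Proof.
  intros H. replace (P * - exp A * exp B) with (- P * (exp A * exp B)) by ring.
  replace (P * exp C * - exp D) with (- P * (exp C * exp D)) by ring.
  rewrite <- !exp_plus, H. reflexivity.
Qed.

Lemma ident (d : nat -> nat) (n : nat) (s : R) :
  0 < s -> 0 < dmax d n ->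
  (forall i, (1 <= i <= n)%nat -> INR (d i) <> 0) ->
  forall j, (2 * j + 1 <= n)%nat ->
  prodR Nat.odd (bx d n s) (2 * j) *
  exp (INR (d (2 * j + 1)%nat) * sig d (2 * j) * (ln (tau d n) + ln s)
       - (INR (d 1%nat) - INR (d (2 * j + 1)%nat)) * (ln (dmax d n ^ 2) / INR (d 1%nat)))
  = prodR Nat.even (bx d n s) (2 * j).
Proof.
  intros Hs Hm Hd j. induction j as [|j IH]; intros Hj.
  - simpl. unfold sig. simpl. match goal with |- context[exp ?x] => replace x with 0 by ring end. rewrite exp_0. ring.
  - replace (2 * S j)%nat with (S (S (2 * j))) by lia.
    cbn [prodR].
    rewrite Nat.odd_succ_succ, odd2, Nat.even_succ_succ, even2.
    rewrite Nat.odd_succ, even2, Nat.even_succ, odd2.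
    rewrite <- IH by lia.
    unfold bx. rewrite !bseq_closed by (auto; lia).
    rewrite !exp_pow'. unfold DD.
    assert (E1 : sig d (S (2 * j)) = sig d (2 * j) + 1 / INR (d (S (2 * j)))) by reflexivity.
    assert (E2 : sig d (S (S (2 * j))) = sig d (2 * j) + 1 / INR (d (S (2 * j))) + 1 / INR (d (S (S (2 * j))))) by reflexivity.
    rewrite E1, E2, !plus_INR.
    replace (S (S (2 * j)) + 1)%nat with (S (S (S (2 * j)))) by lia.
    replace (2 * j + 1)%nat with (S (2 * j)) by lia.
    assert (H1 : INR (d (S (2 * j))) <> 0) by (apply Hd; lia).
    assert (H2 : INR (d (S (S (2 * j)))) <> 0) by (apply Hd; lia).
    rewrite !Rmult_1_r. apply expeq. field. split; [apply Hd; lia|auto].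
Qed.

Lemma sum1_ext (f g : nat -> R) m : (forall i, f i = g i) -> sum1 f m = sum1 g m.
Proof. intros H; induction m; simpl; [reflexivity|rewrite IHm, H; reflexivity]. Qed.

Lemma sum1_scale (c : R) (f : nat -> R) m : sum1 (fun i => c * f i) m = c * sum1 f m.
Proof. induction m; simpl; [ring|rewrite IHm; ring]. Qed.

Lemma sum1_pos (f : nat -> R) m : (forall i, (1 <= i <= m)%nat -> 0 < f i) -> (1 <= m)%nat -> 0 < sum1 f m.
Proof.
  induction m as [|m IH]; intros H Hm. lia. simpl.
  destruct m. simpl. rewrite Rplus_0_l. apply H; lia.
  assert (0 < sum1 f (S m)) by (apply IH; intros; try apply H; lia).
  assert (0 < f (S (S m))) by (apply H; lia). lra.
Qed.

Lemma sum1_mono (f : nat -> R) m k : (forall i, 0 <= f i) -> (k <= m)%nat -> sum1 f k <= sum1 f m.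
Proof.
  intros H Hk. induction m as [|m IH].
  - replace k with O by lia. lra.
  - destruct (Nat.eq_dec k (S m)) as [->|]. lra.
    simpl. pose proof (H (S m)). assert (sum1 f k <= sum1 f m) by (apply IH; lia). lra.
Qed.

Lemma max1_ge (f : nat -> nat) m i : (1 <= i <= m)%nat -> (f i <= max1 f m)%nat.
Proof.
  induction m as [|m IH]; intros Hi. lia. simpl.
  destruct (Nat.eq_dec i (S m)) as [->|]. lia.
  assert (f i <= max1 f m)%nat by (apply IH; lia). lia.
Qed.

Lemma key_ident (d : nat -> nat) (n : nat) (s : R) :
  0 < s -> (3 <= n)%nat -> Nat.odd n = true ->
  (forall i, (1 <= i <= n)%nat -> (0 < d i)%nat) -> 1 < INR (d n) ->
  INR (d 1%nat) * INR (d n) * Rpower s (nu d n) ^ (d n - 1) * prodR Nat.odd (bx d n s) (n - 1)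
  = prodR Nat.even (bx d n s) (n - 1).
Proof.
  intros Hs Hn3 Hodd Hd Hdn.
  assert (Hd' : forall i, (1 <= i <= n)%nat -> INR (d i) <> 0).
  { intros i Hi. apply not_0_INR. specialize (Hd i Hi). lia. }
  assert (Hd1 : 0 < INR (d 1%nat)) by (apply lt_0_INR, Hd; lia).
  assert (Hm : 0 < dmax d n).
  { unfold dmax. apply lt_0_INR. pose proof (max1_ge d n 1). specialize (Hd 1%nat). lia. }
  apply Nat.odd_spec in Hodd. destruct Hodd as [j Hj].
  pose proof (ident d n s Hs Hm Hd' j ltac:(lia)) as I.
  replace (2 * j + 1)%nat with n in I by lia.
  replace (2 * j)%nat with (n - 1)%nat in I by lia.
  rewrite <- I.
  set (sg := sig d (n - 1)).
  assert (Hsg : 0 < sg).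
  { unfold sg, sig. apply sum1_pos. intros i Hi. unfold Rdiv. rewrite Rmult_1_l.
    apply Rinv_0_lt_compat, lt_0_INR, Hd; lia. lia. }
  set (dn := INR (d n)) in *. set (d1 := INR (d 1%nat)) in *.
  assert (Et : Rpower s (nu d n) ^ (d n - 1) = exp ((dn - 1) * (dn / (dn - 1) * sg * ln s))).
  { unfold Rpower. rewrite exp_pow'. rewrite minus_INR.
    reflexivity. assert (1 < d n)%nat. { apply INR_lt. simpl. exact Hdn. } lia. }
  rewrite Et.
  assert (Etau : ln (tau d n) = (ln d1 + ln dn + 2 * (d1 - dn) / d1 * ln (dmax d n)) / (dn * sg)).
  { unfold tau. change (INR (d n)) with dn; change (INR (d 1%nat)) with d1. rewrite ln_Rpower.
    assert (0 < d1 * dn) by (apply Rmult_lt_0_compat; lra).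
    assert (0 < Rpower (dmax d n) (2 * (d1 - dn) / d1)) by apply exp_pos.
    change (INR (d n)) with dn; change (INR (d 1%nat)) with d1. rewrite ln_mult by lra.
    rewrite ln_mult by lra. unfold Rpower at 1. rewrite ln_exp.
    rewrite (sum1_ext _ (fun i => dn * (1 / INR (d i)))) by (intros; unfold Rdiv; ring).
    rewrite sum1_scale. fold (sig d (n - 1)). fold sg. field. lra. }
  rewrite Etau, ln_pow by lra.
  assert (Ed : d1 * dn = exp (ln d1 + ln dn)) by (rewrite exp_plus, !exp_ln; lra).
  rewrite Ed, <- exp_plus, Rmult_comm. f_equal. f_equal. simpl INR. field. lra.
Qed.

Lemma fac_z (d : nat -> nat) n s i (z : Complex.C) : z <> RtoC 0 ->
  fac d n s i z = (z ^ (DD d i) * (1 - (RtoC (bseq d n s i) * / z) ^ (DD d i)))%C.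
Proof.
  intros Hz. unfold fac. change (Csub ?a ?b) with (a - b)%C. change (RC ?x) with (RtoC x).
  change (Defs.Cpow z ?k) with (z ^ k)%C. ceq.
  rewrite Cpow_mult_l, Cpow_inv by auto. rewrite <- RtoC_pow.
  field. apply Cpow_nz; auto.
Qed.

Lemma fac_w (d : nat -> nat) n s i (w : Complex.C) : 0 < bseq d n s i ->
  fac d n s i w = (RtoC (bx d n s i) * (1 - (w * RtoC (/ bseq d n s i)) ^ (DD d i)))%C.
Proof.
  intros Hb. unfold fac, bx. change (Csub ?a ?b) with (a - b)%C. change (RC ?x) with (RtoC x).
  change (Defs.Cpow w ?k) with (w ^ k)%C. ceq.
  rewrite Cpow_mult_l, <- RtoC_pow, RtoC_opp.
  assert (HH : (RtoC (bseq d n s i ^ DD d i) * RtoC ((/ bseq d n s i) ^ DD d i))%C = RtoC 1).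
  { rewrite <- RtoC_mult, <- Rpow_mult_distr, Rinv_r, pow1 by lra. reflexivity. }
  set (B := RtoC (bseq d n s i ^ DD d i)) in *.
  set (B' := RtoC ((/ bseq d n s i) ^ DD d i)) in *.
  transitivity (- B + w ^ DD d i * (B * B'))%C. rewrite HH. ring. ring.
Qed.

Lemma prodfac_z (d : nat -> nat) n s (P : nat -> bool) (z : Complex.C) m : z <> RtoC 0 ->
  prodC1 (fun i => if P i then fac d n s i z else C1) m =
  (z ^ sumN P (DD d) m *
   prodC1 (fun i => if P i then (1 - (RtoC (bseq d n s i) * / z) ^ (DD d i))%C else C1) m)%C.
Proof.
  intros Hz. rewrite (prod_mul P _ (fun i => z ^ DD d i)%C
     (fun i => (1 - (RtoC (bseq d n s i) * / z) ^ (DD d i))%C)).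
  rewrite prod_pow. reflexivity.
  intros i _ _. apply fac_z; auto.
Qed.

Lemma prodfac_w (d : nat -> nat) n s (P : nat -> bool) (w : Complex.C) m :
  (forall i, (1 <= i <= m)%nat -> 0 < bseq d n s i) ->
  prodC1 (fun i => if P i then fac d n s i w else C1) m =
  (RtoC (prodR P (bx d n s) m) *
   prodC1 (fun i => if P i then (1 - (w * RtoC (/ bseq d n s i)) ^ (DD d i))%C else C1) m)%C.
Proof.
  intros Hb. rewrite (prod_mul P _ (fun i => RtoC (bx d n s i))
     (fun i => (1 - (w * RtoC (/ bseq d n s i)) ^ (DD d i))%C)).
  rewrite prod_RtoC. reflexivity.
  intros i Hi _. apply fac_w; auto.
Qed.

Lemma deg_ident (d : nat -> nat) j :
  (sumN Nat.odd (DD d) (2 * j) + d (2 * j + 1)%nat = sumN Nat.even (DD d) (2 * j) + d 1%nat)%nat.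
Proof.
  induction j as [|j IH]. simpl. lia.
  replace (2 * S j)%nat with (S (S (2 * j))) by lia. cbn [sumN].
  rewrite Nat.odd_succ_succ, odd2, Nat.even_succ_succ, even2.
  rewrite Nat.odd_succ, even2, Nat.even_succ, odd2. unfold DD in *.
  replace (S (S (2 * j)) + 1)%nat with (S (S (S (2 * j)))) by lia.
  replace (2 * j + 1)%nat with (S (2 * j)) in IH by lia. lia.
Qed.

Lemma pow_le1 (x : R) (k : nat) : 0 <= x <= 1 -> x ^ k <= 1.
Proof. intros H. induction k. simpl; lra. simpl. pose proof (pow_le x k (proj1 H)). nra. Qed.

Lemma pow_le_self (x : R) (k : nat) : 0 <= x <= 1 -> (1 <= k)%nat -> x ^ k <= x.
Proof.
  intros Hx Hk. destruct k. lia. simpl. pose proof (pow_le x k (proj1 Hx)).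
  assert (x ^ k <= 1) by (apply pow_le1; lra). nra.
Qed.

Lemma Cmul_eq : Defs.Cmul = Cmult. Proof. reflexivity. Qed.
Lemma Cadd_eq : Defs.Cadd = Cplus. Proof. reflexivity. Qed.
Lemma Csub_eq : Defs.Csub = Cminus. Proof. reflexivity. Qed.
Lemma RC_eq : RC = RtoC. Proof. reflexivity. Qed.
Lemma Cpow_eq : Defs.Cpow = Complex.Cpow. Proof. reflexivity. Qed.
Lemma Cinv_eq : Defs.Cinv = Complex.Cinv. Proof. reflexivity. Qed.
Lemma C1_eq : C1 = RtoC 1. Proof. reflexivity. Qed.
Ltac toC := rewrite ?Cmul_eq, ?Cadd_eq, ?Csub_eq, ?RC_eq, ?Cpow_eq, ?Cinv_eq.

Lemma factor_small (u : Complex.C) (D : nat) (rho : R) :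
  Cmod u <= rho -> rho <= 1 -> (1 <= D)%nat -> Cmod ((1 - u ^ D) - 1)%C <= rho.
Proof.
  intros H1 H2 HD. replace ((1 - u ^ D) - 1)%C with (- (u ^ D))%C by ring.
  rewrite Cmod_opp, Cmod_pow. pose proof (Cmod_ge_0 u).
  pose proof (pow_le_self (Cmod u) D ltac:(lra) HD). lra.
Qed.

Lemma term_le_sum (f : nat -> R) m i : (forall k, 0 <= f k) -> (1 <= i <= m)%nat -> f i <= sum1 f m.
Proof.
  intros H Hi. destruct i. lia.
  apply Rle_trans with (sum1 f (S i)). simpl.
  assert (0 <= sum1 f i). { clear Hi. induction i. simpl; lra. simpl. pose proof (H (S i)). lra. }
  lra. apply sum1_mono; auto. lia.
Qed.

Lemma CmodRm (x : R) (u : Complex.C) : Cmod (RtoC x * u)%C = Rabs x * Cmod u.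
Proof. rewrite Cmod_mult, Cmod_R. reflexivity. Qed.

Lemma bpos d n s i : 0 < s -> 0 < dmax d n -> (1 <= i)%nat -> 0 < bseq d n s i.
Proof. intros. rewrite bseq_closed; auto. apply exp_pos. Qed.

Lemma part1_pointwise (n : nat) (d : nat -> nat) (X Y Z W : R -> R) (s r rho : R) (z : Complex.C) :
  (3 <= n)%nat -> Nat.odd n = true ->
  (forall i, (1 <= i <= n)%nat -> (0 < d i)%nat) ->
  0 < s -> 0 < rho <= 1 -> 0 < r -> r <= Cmod z ->
  Rabs (X s - 1) <= rho -> Rabs (Y s) <= rho -> Rabs (Z s - 1) <= rho -> Rabs (W s) <= rho ->
  (forall i, (1 <= i <= n - 1)%nat -> bseq d n s i / r <= rho / 2 ^ (n - 1)) ->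
  chord (Qhom d n X Y Z W s z) (hhom (d 1%nat) z) <= 12 * (7 * INR (d 1%nat) * rho).
Proof.
  intros Hn3 Hodd Hd Hs Hrho Hr Hz HX HY HZ HW Hb.
  assert (Hz0 : z <> RtoC 0) by (apply Cmod_gt_0; lra).
  assert (Hm : 0 < dmax d n).
  { unfold dmax. apply lt_0_INR. pose proof (max1_ge d n 1). specialize (Hd 1%nat). lia. }
  assert (Hd1 : (1 <= d 1%nat)%nat) by (apply Hd; lia).
  assert (Hd1R : 1 <= INR (d 1%nat)) by (apply (le_INR 1); auto).
  apply Nat.odd_spec in Hodd. destruct Hodd as [j Hj].
  pose proof (deg_ident d j) as Hdeg.
  replace (2 * j + 1)%nat with n in Hdeg by lia.
  replace (2 * j)%nat with (n - 1)%nat in Hdeg by lia.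
  set (se := sumN Nat.even (DD d) (n - 1)) in *.
  set (so := sumN Nat.odd (DD d) (n - 1)) in *.
  set (P1 := prodC1 (fun i => if Nat.odd i then (1 - (RtoC (bseq d n s i) * / z) ^ (DD d i))%C else C1) (n - 1)).
  set (P2 := prodC1 (fun i => if Nat.even i then (1 - (RtoC (bseq d n s i) * / z) ^ (DD d i))%C else C1) (n - 1)).
  assert (Hrho1 : 0 < rho / 2 ^ (n - 1) <= 1).
  { assert (1 <= 2 ^ (n - 1)) by (apply pow_R1_Rle; lra). split.
    apply Rdiv_lt_0_compat; lra. unfold Rdiv.
    apply Rle_trans with (rho * 1). apply Rmult_le_compat_l. lra.
    rewrite <- Rinv_1. apply Rinv_le_contravar; lra. lra. }
  assert (HPgen : forall P : nat -> bool,
    Cmod (prodC1 (fun i => if P i then (1 - (RtoC (bseq d n s i) * / z) ^ (DD d i))%C else C1) (n - 1) - 1)%C <= rho).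
  { intros P. eapply Rle_trans. apply (prod_bound P _ (rho / 2 ^ (n - 1))). lra.
    intros i Hi _. apply factor_small; [|lra|].
    rewrite CmodRm, Cmod_inv by auto. rewrite Rabs_pos_eq by (apply Rlt_le, bpos; auto; lia).
    eapply Rle_trans; [|apply (Hb i Hi)]. unfold Rdiv. apply Rmult_le_compat_l.
    apply Rlt_le, bpos; auto; lia. apply Rinv_le_contravar; lra.
    unfold DD. specialize (Hd i ltac:(lia)). lia.
    assert (1 <= 2 ^ (n - 1)) by (apply pow_R1_Rle; lra).
    replace (rho / 2 ^ (n - 1) * (2 ^ (n - 1) - 1)) with (rho - rho / 2 ^ (n - 1)) by (field; lra).
    lra. }
  assert (HP1 : Cmod (P1 - 1)%C <= rho) by apply HPgen.
  assert (HP2 : Cmod (P2 - 1)%C <= rho) by apply HPgen.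
  set (A := (RtoC ((INR (d 1%nat) - 1) * X s) * z ^ d 1%nat + RtoC (Y s) * z + RtoC (Z s))%C).
  assert (EQden : Qden d n X Y Z s z = (z ^ se * (A * P2))%C).
  { unfold Qden. rewrite prodfac_z by auto. toC. fold P2. fold se. unfold A. ceq. ring. }
  assert (EQnum : Qnum d n X Y Z W s z =
     (z ^ se * (RtoC (INR (d 1%nat)) * z ^ d 1%nat * P1 + RtoC (W s) * (A * P2)))%C).
  { unfold Qnum. rewrite EQden. rewrite prodfac_z by auto. toC. fold P1. fold so. ceq.
    replace (RtoC (INR (d 1%nat)) * (z ^ d n * (z ^ so * P1)))%C with
      (RtoC (INR (d 1%nat)) * (z ^ (so + d n) * P1))%C by (rewrite Cpow_add_r; ring).
    rewrite Hdeg, Cpow_add_r. ring. }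
  unfold Qhom. rewrite EQnum, EQden, chord_scale by (apply Cpow_nz; auto).
  set (M := Cmod z ^ d 1%nat + Cmod z + 1).
  assert (HzM : Cmod z ^ d 1%nat <= M) by (unfold M; pose proof (Cmod_ge_0 z); lra).
  assert (HzM' : Cmod z <= M) by (unfold M; pose proof (pow_le (Cmod z) (d 1%nat) (Cmod_ge_0 z)); lra).
  assert (HM1 : 1 <= M) by (unfold M; pose proof (Cmod_ge_0 z); pose proof (pow_le (Cmod z) (d 1%nat) (Cmod_ge_0 z)); lra).
  assert (HXa : Rabs (X s) <= 2).
  { replace (X s) with ((X s - 1) + 1) by ring. eapply Rle_trans. apply Rabs_triang.
    rewrite Rabs_R1. lra. }
  assert (HZa : Rabs (Z s) <= 2).
  { replace (Z s) with ((Z s - 1) + 1) by ring. eapply Rle_trans. apply Rabs_triang.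
    rewrite Rabs_R1. lra. }
  assert (HP2a : Cmod P2 <= 2).
  { replace P2 with ((P2 - 1) + 1)%C by ring. eapply Rle_trans. apply Cmod_triangle.
    rewrite Cmod_1. lra. }
  assert (Hk1 : 0 <= INR (d 1%nat) - 1) by lra.
  assert (HA : Cmod A <= 3 * INR (d 1%nat) * M).
  { unfold A. eapply Rle_trans. apply Cmod_triangle. eapply Rle_trans.
    apply Rplus_le_compat_r. apply Cmod_triangle.
    rewrite !CmodRm, Rabs_mult, Cmod_pow, (Rabs_pos_eq (INR _ - 1)) by lra.
    pose proof (Rabs_pos (X s)). pose proof (Cmod_ge_0 z).
    pose proof (pow_le (Cmod z) (d 1%nat) (Cmod_ge_0 z)).
    assert ((INR (d 1%nat) - 1) * Rabs (X s) * Cmod z ^ d 1%nat <= (INR (d 1%nat) - 1) * 2 * M).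
    { apply Rmult_le_compat; try nra. }
    assert (Rabs (Y s) * Cmod z <= 1 * M) by (apply Rmult_le_compat; try lra; apply Rabs_pos).
    rewrite Cmod_R. nra. }
  assert (HAT : Cmod (A - (RtoC (INR (d 1%nat) - 1) * z ^ d 1%nat + 1))%C <= INR (d 1%nat) * rho * M).
  { replace (A - (RtoC (INR (d 1%nat) - 1) * z ^ d 1%nat + 1))%C with
      (RtoC ((INR (d 1%nat) - 1) * (X s - 1)) * z ^ d 1%nat + RtoC (Y s) * z + RtoC (Z s - 1))%C
      by (unfold A; rewrite !RtoC_mult, !RtoC_minus; ring).
    eapply Rle_trans. apply Cmod_triangle. eapply Rle_trans.
    apply Rplus_le_compat_r. apply Cmod_triangle.
    rewrite !CmodRm, Rabs_mult, Cmod_pow, (Rabs_pos_eq (INR _ - 1)) by lra.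
    pose proof (Rabs_pos (X s - 1)). pose proof (Cmod_ge_0 z).
    pose proof (pow_le (Cmod z) (d 1%nat) (Cmod_ge_0 z)).
    assert ((INR (d 1%nat) - 1) * Rabs (X s - 1) * Cmod z ^ d 1%nat <= (INR (d 1%nat) - 1) * rho * Cmod z ^ d 1%nat).
    { apply Rmult_le_compat; try nra. }
    assert (Rabs (Y s) * Cmod z <= rho * Cmod z) by (apply Rmult_le_compat; try lra; apply Rabs_pos).
    rewrite Cmod_R. unfold M.
    assert (0 <= (INR (d 1%nat) - 1) * (rho * Cmod z)) by (apply Rmult_le_pos; nra).
    assert (0 <= (INR (d 1%nat) - 1) * rho) by (apply Rmult_le_pos; nra).
    assert (0 <= rho * Cmod z ^ d 1%nat) by (apply Rmult_le_pos; nra).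
    nra. }
  apply approx_chord. lia. nra.
  - replace (RtoC (INR (d 1%nat)) * z ^ d 1%nat * P1 + RtoC (W s) * (A * P2) -
       RtoC (INR (d 1%nat)) * z ^ d 1%nat)%C with
      (RtoC (INR (d 1%nat)) * z ^ d 1%nat * (P1 - 1) + RtoC (W s) * (A * P2))%C by ring.
    eapply Rle_trans. apply Cmod_triangle.
    rewrite !Cmod_mult, !Cmod_R, Cmod_pow, Rabs_pos_eq by lra.
    fold M.
    pose proof (Cmod_ge_0 (P1 - 1)%C). pose proof (Cmod_ge_0 A). pose proof (Cmod_ge_0 P2).
    pose proof (pow_le (Cmod z) (d 1%nat) (Cmod_ge_0 z)). pose proof (Rabs_pos (W s)).
    assert (T1 : INR (d 1%nat) * Cmod z ^ d 1%nat * Cmod (P1 - 1)%C <= INR (d 1%nat) * M * rho).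
    { apply Rmult_le_compat; try nra. }
    assert (T2 : Cmod A * Cmod P2 <= 3 * INR (d 1%nat) * M * 2) by (apply Rmult_le_compat; try nra).
    assert (T3 : Rabs (W s) * (Cmod A * Cmod P2) <= rho * (3 * INR (d 1%nat) * M * 2)).
    { apply Rmult_le_compat; try nra. }
    nra.
  - set (T := (RtoC (INR (d 1%nat) - 1) * z ^ d 1%nat + 1)%C) in *.
    replace (A * P2 - T)%C with ((A - T) * P2 + T * (P2 - 1))%C by ring.
    eapply Rle_trans. apply Cmod_triangle. rewrite !Cmod_mult.
    assert (HT : Cmod T <= INR (d 1%nat) * M).
    { unfold T. eapply Rle_trans. apply Cmod_triangle. rewrite CmodRm, Cmod_pow, Cmod_1.
      rewrite Rabs_pos_eq by lra. pose proof (pow_le (Cmod z) (d 1%nat) (Cmod_ge_0 z)). nra. }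
    pose proof (Cmod_ge_0 (A - T)%C). pose proof (Cmod_ge_0 T). pose proof (Cmod_ge_0 P2).
    pose proof (Cmod_ge_0 (P2 - 1)%C).
    assert (T1 : Cmod (A - T)%C * Cmod P2 <= INR (d 1%nat) * rho * M * 2) by (apply Rmult_le_compat; lra).
    assert (T2 : Cmod T * Cmod (P2 - 1)%C <= INR (d 1%nat) * M * rho) by (apply Rmult_le_compat; lra).
    fold M. assert (0 <= INR (d 1%nat) * rho * M) by (apply Rmult_le_pos; nra). nra.
Qed.

Lemma prodR_nz (P : nat -> bool) (x : nat -> R) m :
  (forall i, (1 <= i <= m)%nat -> x i <> 0) -> prodR P x m <> 0.
Proof.
  induction m as [|m IH]; intros H; simpl. lra.
  apply Rmult_integral_contrapositive_currified. apply IH; intros; apply H; lia.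
  destruct (P (S m)). apply H; lia. lra.
Qed.

Lemma part2_pointwise (n : nat) (d : nat -> nat) (X Y Z W : R -> R) (s r rho : R) (z : Complex.C) :
  (3 <= n)%nat -> Nat.odd n = true ->
  (forall i, (1 <= i <= n)%nat -> (0 < d i)%nat) -> 1 < INR (d n) ->
  0 < s -> 0 < rho <= 1 -> 0 < r -> r <= Cmod z ->
  Rabs (X s - 1) <= rho -> Rabs (Y s) <= rho -> Rabs (Z s - 1) <= rho ->
  Rabs (W s / Rpower s (nu d n) - (INR (d n) - 1) / INR (d n)) <= rho ->
  Rpower s (nu d n) / r <= rho ->
  (forall i, (1 <= i <= n - 1)%nat -> Rpower s (nu d n) / (r * bseq d n s i) <= rho / 2 ^ (n - 1)) ->
  chord (Qhat_hom d n X Y Z W s z) (hhom (d n) z) <= 12 * (16 * INR (d 1%nat) * INR (d n) * rho).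
Proof.
  intros Hn3 Hodd Hd Hdn Hs Hrho Hr Hz HX HY HZ HW Ht Hb.
  assert (Hz0 : z <> RtoC 0) by (apply Cmod_gt_0; lra).
  assert (Hm : 0 < dmax d n).
  { unfold dmax. apply lt_0_INR. pose proof (max1_ge d n 1). specialize (Hd 1%nat). lia. }
  assert (Hd1 : (1 <= d 1%nat)%nat) by (apply Hd; lia).
  assert (Hd1R : 1 <= INR (d 1%nat)) by (apply (le_INR 1); auto).
  assert (Hbp : forall i, (1 <= i)%nat -> 0 < bseq d n s i) by (intros; apply bpos; auto).
  pose proof (key_ident d n s Hs Hn3 Hodd Hd Hdn) as Hkey.
  unfold Qhat_hom. cbv zeta.
  set (t := Rpower s (nu d n)) in *.
  assert (Htp : 0 < t) by apply exp_pos.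
  set (w := Cmul (RC t) (Defs.Cinv z)).
  assert (Hw : Cmod w <= rho).
  { unfold w. toC. rewrite CmodRm, Cmod_inv, Rabs_pos_eq by (auto; lra).
    eapply Rle_trans; [|apply Ht]. unfold Rdiv. apply Rmult_le_compat_l. lra.
    apply Rinv_le_contravar; lra. }
  set (Q1 := prodC1 (fun i => if Nat.odd i then (1 - (w * RtoC (/ bseq d n s i)) ^ (DD d i))%C else C1) (n - 1)).
  set (Q2 := prodC1 (fun i => if Nat.even i then (1 - (w * RtoC (/ bseq d n s i)) ^ (DD d i))%C else C1) (n - 1)).
  assert (Hrho1 : 0 < rho / 2 ^ (n - 1) <= 1).
  { assert (1 <= 2 ^ (n - 1)) by (apply pow_R1_Rle; lra). split.
    apply Rdiv_lt_0_compat; lra. unfold Rdiv.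
    apply Rle_trans with (rho * 1). apply Rmult_le_compat_l. lra.
    rewrite <- Rinv_1. apply Rinv_le_contravar; lra. lra. }
  assert (HPgen : forall P : nat -> bool,
    Cmod (prodC1 (fun i => if P i then (1 - (w * RtoC (/ bseq d n s i)) ^ (DD d i))%C else C1) (n - 1) - 1)%C <= rho).
  { intros P. eapply Rle_trans. apply (prod_bound P _ (rho / 2 ^ (n - 1))). lra.
    intros i Hi _. apply factor_small; [|lra|].
    rewrite Cmod_mult, Cmod_R. rewrite Rabs_pos_eq by (apply Rlt_le, Rinv_0_lt_compat, Hbp; lia).
    eapply Rle_trans; [|apply (Hb i Hi)].
    unfold w. toC. rewrite CmodRm, Cmod_inv, Rabs_pos_eq by (auto; lra).
    assert (0 < bseq d n s i) by (apply Hbp; lia).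
    unfold Rdiv. rewrite Rinv_mult. rewrite Rmult_assoc. apply Rmult_le_compat_l. lra.
    apply Rmult_le_compat_r. apply Rlt_le, Rinv_0_lt_compat; lra.
    apply Rinv_le_contravar; lra.
    unfold DD. specialize (Hd i ltac:(lia)). lia.
    assert (1 <= 2 ^ (n - 1)) by (apply pow_R1_Rle; lra).
    replace (rho / 2 ^ (n - 1) * (2 ^ (n - 1) - 1)) with (rho - rho / 2 ^ (n - 1)) by (field; lra).
    lra. }
  assert (HQ1 : Cmod (Q1 - 1)%C <= rho) by apply HPgen.
  assert (HQ2 : Cmod (Q2 - 1)%C <= rho) by apply HPgen.
  set (A := (RtoC ((INR (d 1%nat) - 1) * X s) * w ^ d 1%nat + RtoC (Y s) * w + RtoC (Z s))%C).
  set (So := prodR Nat.odd (bx d n s) (n - 1)) in *.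
  set (Se := prodR Nat.even (bx d n s) (n - 1)) in *.
  assert (HSo : So <> 0).
  { apply prodR_nz. intros i Hi. unfold bx. assert (0 < bseq d n s i) by (apply Hbp; lia).
    pose proof (pow_lt _ (DD d i) H). lra. }
  assert (EQden : Qden d n X Y Z s w = (A * (RtoC Se * Q2))%C).
  { unfold Qden. rewrite prodfac_w by (intros; apply Hbp; lia). toC. fold Q2. fold Se.
    unfold A. ceq. ring. }
  assert (EQnum : Qnum d n X Y Z W s w =
     (RtoC (INR (d 1%nat)) * (w ^ d n * (RtoC So * Q1)) + RtoC (W s) * (A * (RtoC Se * Q2)))%C).
  { unfold Qnum. rewrite EQden. rewrite prodfac_w by (intros; apply Hbp; lia). toC. fold Q1. fold So.
    ceq. ring. }
  set (dn := INR (d n)) in *. set (d1 := INR (d 1%nat)) in *.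
  assert (Hdn0 : dn <> 0) by lra.
  assert (Htk : t ^ d n = t * t ^ (d n - 1)).
  { replace (d n) with (S (d n - 1)) at 1. reflexivity.
    assert (1 < d n)%nat by (apply INR_lt; simpl; exact Hdn). lia. }
  set (lam := (RtoC (t * Se / dn) * / z ^ d n)%C).
  set (a := (RtoC dn * (A * Q2) * z ^ d n)%C).
  set (b := (RtoC (dn * (W s / t)) * (A * Q2) * z ^ d n + Q1)%C).
  assert (Hzn : (z ^ d n)%C <> RtoC 0) by (apply Cpow_nz; auto).
  assert (E1 : Cmul (RC t) (Qden d n X Y Z s w) = (lam * a)%C).
  { rewrite EQden. toC. unfold lam, a. rewrite RtoC_div by auto. rewrite RtoC_mult.
    ceq. field. split; auto. intro H. apply RtoC_inj in H. auto. }
  assert (E2 : Qnum d n X Y Z W s w = (lam * b)%C).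
  { rewrite EQnum. unfold lam, b, w. toC.
    rewrite Cpow_mult_l, Cpow_inv, <- RtoC_pow, Htk by auto.
    rewrite <- Hkey. repeat (rewrite RtoC_mult || rewrite RtoC_div by lra).
    ceq. field. split; [|split]; auto; intro H; apply RtoC_inj in H; lra. }
  rewrite E1, E2. rewrite chord_scale.
  2:{ unfold lam. apply Cmult_neq_0. intro H. apply RtoC_inj in H.
      assert (Se <> 0).
      { rewrite <- Hkey. apply Rmult_integral_contrapositive_currified; auto.
        apply Rmult_integral_contrapositive_currified. apply Rmult_integral_contrapositive_currified; lra.
        apply pow_nonzero; lra. }
      assert (t * Se / dn <> 0).
      { unfold Rdiv. apply Rmult_integral_contrapositive_currified.
        apply Rmult_integral_contrapositive_currified; lra. apply Rinv_neq_0_compat; auto. }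
      auto.
      intro H. pose proof (Cinv_r _ Hzn) as H'. rewrite H, Cmult_0_r in H'.
      apply C1_nz. auto. }
  assert (Hdn1 : (1 <= d n)%nat) by (apply Hd; lia).
  assert (Hw1 : Cmod w ^ d 1%nat <= Cmod w) by (apply pow_le_self; auto; pose proof (Cmod_ge_0 w); lra).
  assert (HA1 : Cmod (A - 1)%C <= 3 * d1 * rho).
  { replace (A - 1)%C with
      (RtoC ((d1 - 1) * X s) * w ^ d 1%nat + RtoC (Y s) * w + RtoC (Z s - 1))%C
      by (unfold A; rewrite RtoC_minus; ring).
    eapply Rle_trans. apply Cmod_triangle. eapply Rle_trans.
    apply Rplus_le_compat_r. apply Cmod_triangle.
    rewrite !CmodRm, Rabs_mult, Cmod_pow, Cmod_R, (Rabs_pos_eq (d1 - 1)) by lra.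
    assert (HXa : Rabs (X s) <= 2).
    { replace (X s) with ((X s - 1) + 1) by ring. eapply Rle_trans. apply Rabs_triang.
      rewrite Rabs_R1. lra. }
    pose proof (Rabs_pos (X s)). pose proof (Cmod_ge_0 w). pose proof (Rabs_pos (Y s)).
    pose proof (pow_le (Cmod w) (d 1%nat) (Cmod_ge_0 w)).
    assert ((d1 - 1) * Rabs (X s) * Cmod w ^ d 1%nat <= (d1 - 1) * 2 * rho).
    { apply Rmult_le_compat; try nra. }
    assert (Rabs (Y s) * Cmod w <= rho * rho) by (apply Rmult_le_compat; lra).
    nra. }
  assert (HQ2a : Cmod Q2 <= 2).
  { replace Q2 with ((Q2 - 1) + 1)%C by ring. eapply Rle_trans. apply Cmod_triangle.
    rewrite Cmod_1. lra. }
  assert (HAQ : Cmod (A * Q2 - 1)%C <= 7 * d1 * rho).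
  { replace (A * Q2 - 1)%C with ((A - 1) * Q2 + (Q2 - 1))%C by ring.
    eapply Rle_trans. apply Cmod_triangle. rewrite Cmod_mult.
    pose proof (Cmod_ge_0 (A - 1)%C). pose proof (Cmod_ge_0 Q2).
    assert (Cmod (A - 1)%C * Cmod Q2 <= 3 * d1 * rho * 2) by (apply Rmult_le_compat; lra).
    nra. }
  assert (HAQa : Cmod (A * Q2)%C <= 8 * d1).
  { replace (A * Q2)%C with ((A * Q2 - 1) + 1)%C by ring. eapply Rle_trans. apply Cmod_triangle.
    rewrite Cmod_1. nra. }
  set (M := Cmod z ^ d n + Cmod z + 1).
  pose proof (pow_le (Cmod z) (d n) (Cmod_ge_0 z)) as Hzp.
  assert (HzM : Cmod z ^ d n <= M) by (unfold M; pose proof (Cmod_ge_0 z); lra).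
  assert (HM1 : 1 <= M) by (unfold M; pose proof (Cmod_ge_0 z); lra).
  assert (Hdd : 1 <= d1 * dn) by nra.
  apply approx_chord. lia. nra.
  - fold dn. unfold a.
    replace (RtoC dn * (A * Q2) * z ^ d n - RtoC dn * z ^ d n)%C with
      (RtoC dn * (A * Q2 - 1) * z ^ d n)%C by ring.
    rewrite !Cmod_mult, Cmod_R, Cmod_pow, Rabs_pos_eq by lra. fold M.
    pose proof (Cmod_ge_0 (A * Q2 - 1)%C).
    assert (dn * Cmod (A * Q2 - 1)%C <= dn * (7 * d1 * rho)) by (apply Rmult_le_compat_l; lra).
    assert (0 <= dn * Cmod (A * Q2 - 1)%C) by nra.
    assert (dn * Cmod (A * Q2 - 1)%C * Cmod z ^ d n <= dn * (7 * d1 * rho) * M)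
      by (apply Rmult_le_compat; lra).
    assert (0 <= d1 * dn * rho * M) by (apply Rmult_le_pos; nra).
    nra.
  - fold dn. unfold b.
    set (e := W s / t - (dn - 1) / dn) in *.
    assert (Hsp : dn * (W s / t) = (dn - 1) + dn * e) by (unfold e; field; lra).
    rewrite Hsp, RtoC_plus.
    replace ((RtoC (dn - 1) + RtoC (dn * e)) * (A * Q2) * z ^ d n + Q1 -
      (RtoC (dn - 1) * z ^ d n + 1))%C with
      ((RtoC (dn - 1) * (A * Q2 - 1) + RtoC (dn * e) * (A * Q2)) * z ^ d n + (Q1 - 1))%C by ring.
    eapply Rle_trans. apply Cmod_triangle. rewrite Cmod_mult, Cmod_pow.
    assert (HB : Cmod (RtoC (dn - 1) * (A * Q2 - 1) + RtoC (dn * e) * (A * Q2))%C <= 15 * d1 * dn * rho).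
    { eapply Rle_trans. apply Cmod_triangle. rewrite !CmodRm, Rabs_mult.
      rewrite (Rabs_pos_eq (dn - 1)) by lra. rewrite (Rabs_pos_eq dn) by lra.
      pose proof (Cmod_ge_0 (A * Q2 - 1)%C). pose proof (Cmod_ge_0 (A * Q2)%C). pose proof (Rabs_pos e).
      assert ((dn - 1) * Cmod (A * Q2 - 1)%C <= (dn - 1) * (7 * d1 * rho)) by (apply Rmult_le_compat_l; lra).
      assert (dn * Rabs e * Cmod (A * Q2)%C <= dn * rho * (8 * d1)).
      { apply Rmult_le_compat; try nra. }
      nra. }
    fold M. pose proof (Cmod_ge_0 (RtoC (dn - 1) * (A * Q2 - 1) + RtoC (dn * e) * (A * Q2))%C).
    assert (Cmod (RtoC (dn - 1) * (A * Q2 - 1) + RtoC (dn * e) * (A * Q2))%C * Cmod z ^ d n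
            <= 15 * d1 * dn * rho * M) by (apply Rmult_le_compat; lra).
    assert (0 <= d1 * dn * rho * M) by (apply Rmult_le_pos; nra).
    assert (rho <= d1 * dn * rho * M).
    { assert (rho * 1 <= rho * (d1 * dn)) by (apply Rmult_le_compat_l; lra).
      assert (rho * (d1 * dn) * 1 <= rho * (d1 * dn) * M) by (apply Rmult_le_compat_l; nra).
      nra. }
    nra.
Qed.

Lemma ev_exp_le (g : R -> R) (c c' rho : R) : 0 < c -> 0 < rho ->
  (forall s, 0 < s -> g s = exp (c * ln s + c')) -> ev (fun s => g s <= rho).
Proof.
  intros Hc Hr H. apply ev_mono with (P := fun s => exp (c * ln s + c') < rho).
  apply exp_small; auto. intros s Hs Hl. rewrite H; auto. lra.
Qed.

Lemma exp_div_r (x r : R) : 0 < r -> exp x / r = exp (x - ln r).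
Proof.
  intros Hr. unfold Rminus. rewrite exp_plus, exp_Ropp, exp_ln by auto. reflexivity.
Qed.

Theorem lemma3p4 (n : nat) (d : nat -> nat) (X Y Z W : R -> R) (s0 : R) :
  (3 <= n)%nat -> Nat.odd n = true ->
  (forall i, (1 <= i <= n)%nat -> (0 < d i)%nat) ->
  sum1 (fun i => 1 / INR (d i)) n < 1 ->
  0 < s0 ->
  (forall s, 0 < s < s0 ->
     let t := Rpower s (nu d n) in
     fst (Qden d n X Y Z s (RC 1)) <> 0 /\
     Qreal d n X Y Z W s 1 = 1 /\
     derivable_pt_lim (Qreal d n X Y Z W s) 1 1 /\
     fst (Qden d n X Y Z s (RC t)) <> 0 /\
     Qreal d n X Y Z W s t = t /\
     derivable_pt_lim (Qreal d n X Y Z W s) t 1) ->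
  lim0p (fun s => (X s - 1) / Rpower s (nu d n))
        (INR (d 1%nat) * (INR (d 1%nat) - 3) * (INR (d n) - 1)
         / ((INR (d 1%nat) - 1) ^ 2 * INR (d n))) ->
  lim0p (fun s => Y s / Rpower s (nu d n))
        (2 * INR (d 1%nat) * (INR (d n) - 1) / ((INR (d 1%nat) - 1) * INR (d n))) ->
  lim0p (fun s => (Z s - 1) / Rpower s (nu d n)) 0 ->
  lim0p (fun s => W s / Rpower s (nu d n)) ((INR (d n) - 1) / INR (d n)) ->
  locunif_conv (Qhom d n X Y Z W) (hhom (d 1%nat)) /\
  locunif_conv (Qhat_hom d n X Y Z W) (hhom (d n)).
Proof.
  intros Hn3 Hodd Hd Hsum Hs0 _ LX LY LZ LW.
  assert (Hgt1 : forall i, (1 <= i <= n)%nat -> 1 < INR (d i)).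
  { intros i Hi. assert (Hp : 0 < INR (d i)) by (apply lt_0_INR, Hd; auto).
    assert (1 / INR (d i) < 1).
    { eapply Rle_lt_trans; [|apply Hsum]. apply (term_le_sum (fun i => 1 / INR (d i))); auto.
      intros k. unfold Rdiv. rewrite Rmult_1_l. destruct (Req_dec (INR (d k)) 0) as [E|E].
      rewrite E, Rinv_0. lra. apply Rlt_le, Rinv_0_lt_compat.
      pose proof (pos_INR (d k)). lra. }
    apply Rmult_lt_compat_r with (r := INR (d i)) in H; auto.
    unfold Rdiv in H. rewrite Rmult_1_l, Rinv_l in H by lra. lra. }
  assert (Hdn : 1 < INR (d n)) by (apply Hgt1; lia).
  assert (Hd1 : 1 < INR (d 1%nat)) by (apply Hgt1; lia).
  assert (Hsigp : forall i, (1 <= i <= n)%nat -> 0 < sig d i).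
  { intros i Hi. unfold sig. apply sum1_pos; [|lia]. intros k Hk.
    unfold Rdiv. rewrite Rmult_1_l. apply Rinv_0_lt_compat. pose proof (Hgt1 k ltac:(lia)). lra. }
  assert (Hsn : 0 < sig d (n - 1)) by (apply Hsigp; lia).
  assert (Hnu : nu d n = INR (d n) / (INR (d n) - 1) * sig d (n - 1)) by reflexivity.
  assert (Hnusig : forall i, (1 <= i <= n - 1)%nat -> 0 < nu d n - sig d i).
  { intros i Hi. rewrite Hnu.
    assert (sig d i <= sig d (n - 1)).
    { unfold sig. apply sum1_mono; [|lia]. intros k. unfold Rdiv. rewrite Rmult_1_l.
      destruct (Req_dec (INR (d k)) 0) as [E|E]. rewrite E, Rinv_0. lra.
      apply Rlt_le, Rinv_0_lt_compat. pose proof (pos_INR (d k)). lra. }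
    assert (1 < INR (d n) / (INR (d n) - 1)).
    { apply Rmult_lt_reg_r with (INR (d n) - 1). lra. unfold Rdiv.
      rewrite Rmult_assoc, Rinv_l by lra. lra. }
    nra. }
  assert (Hnup : 0 < nu d n).
  { pose proof (Hnusig 1%nat ltac:(lia)). pose proof (Hsigp 1%nat ltac:(lia)). lra. }
  assert (Hm : 0 < dmax d n).
  { unfold dmax. apply lt_0_INR. pose proof (max1_ge d n 1). specialize (Hd 1%nat). lia. }
  set (Lt := ln (tau d n)). set (K := ln (dmax d n ^ 2) / INR (d 1%nat)).
  split.
  - intros r Hr eps Heps.
    set (d1 := INR (d 1%nat)) in *.
    set (rho := Rmin 1 (eps / (100 * d1))).
    assert (Hrho : 0 < rho <= 1).
    { unfold rho. split. apply Rmin_pos. lra. apply Rdiv_lt_0_compat; lra. apply Rmin_l. }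
    assert (Hrho1 : 0 < rho / 2 ^ (n - 1)) by (apply Rdiv_lt_0_compat; [lra|apply pow_lt; lra]).
    assert (Hev : ev (fun s => (Rabs (X s - 1) <= rho /\ Rabs (Y s) <= rho) /\
                               (Rabs (Z s - 1) <= rho /\ Rabs (W s) <= rho) /\
                               (forall i, (1 <= i <= n - 1)%nat -> bseq d n s i / r <= rho / 2 ^ (n - 1)))).
    { apply ev_and. apply ev_and.
      apply (lim_small (fun s => X s - 1) (nu d n) _ rho LX); lra.
      apply (lim_small Y (nu d n) _ rho LY); lra.
      apply ev_and. apply ev_and.
      apply (lim_small (fun s => Z s - 1) (nu d n) _ rho LZ); lra.
      apply (lim_small W (nu d n) _ rho LW); lra.
      apply ev_fin. intros i Hi.
      apply (ev_exp_le _ (sig d i) (sig d i * Lt + K - ln r)); auto. apply Hsigp; lia.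
      intros s Hs. rewrite bseq_closed by (auto; lia). rewrite exp_div_r by auto.
      f_equal. unfold Lt, K, d1. ring. }
    destruct Hev as [delta [Hdelta Hev]].
    exists delta. split; auto. intros s Hs z Hz _.
    destruct (Hev s Hs) as [[HX HY] [[HZ HW] Hb]].
    eapply Rle_lt_trans. apply (part1_pointwise n d X Y Z W s r rho z); auto; lra.
    fold d1. assert (rho <= eps / (100 * d1)) by apply Rmin_r.
    assert (d1 * rho <= d1 * (eps / (100 * d1))) by (apply Rmult_le_compat_l; lra).
    replace (d1 * (eps / (100 * d1))) with (eps / 100) in H0 by (field; lra).
    lra.
  - intros r Hr eps Heps.
    set (d1 := INR (d 1%nat)) in *. set (dn := INR (d n)) in *.
    set (rho := Rmin 1 (eps / (400 * d1 * dn))).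
    assert (Hrho : 0 < rho <= 1).
    { unfold rho. split. apply Rmin_pos. lra. apply Rdiv_lt_0_compat; nra. apply Rmin_l. }
    assert (Hrho1 : 0 < rho / 2 ^ (n - 1)) by (apply Rdiv_lt_0_compat; [lra|apply pow_lt; lra]).
    assert (Hev : ev (fun s => (Rabs (X s - 1) <= rho /\ Rabs (Y s) <= rho) /\
                               (Rabs (Z s - 1) <= rho /\
                                Rabs (W s / Rpower s (nu d n) - (dn - 1) / dn) <= rho) /\
                               (Rpower s (nu d n) / r <= rho /\
                               (forall i, (1 <= i <= n - 1)%nat ->
                                  Rpower s (nu d n) / (r * bseq d n s i) <= rho / 2 ^ (n - 1))))).
    { apply ev_and. apply ev_and.
      apply (lim_small (fun s => X s - 1) (nu d n) _ rho LX); lra.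
      apply (lim_small Y (nu d n) _ rho LY); lra.
      apply ev_and. apply ev_and.
      apply (lim_small (fun s => Z s - 1) (nu d n) _ rho LZ); lra.
      apply (lim_near _ _ rho LW); lra.
      apply ev_and.
      apply (ev_exp_le _ (nu d n) (- ln r)); try lra.
      intros s Hs. unfold Rpower. rewrite exp_div_r by auto. f_equal; ring.
      apply ev_fin. intros i Hi.
      apply (ev_exp_le _ (nu d n - sig d i) (- sig d i * Lt - K - ln r)); try lra.
      apply Hnusig; lia. intros s Hs. rewrite bseq_closed by (auto; lia). unfold Rpower.
      unfold Rdiv. rewrite Rinv_mult, <- Rmult_assoc. fold (Rdiv (exp (nu d n * ln s)) r).
      rewrite exp_div_r by auto. rewrite <- exp_Ropp, <- exp_plus.
      f_equal. unfold Lt, K, d1. unfold Rdiv. ring. }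
    destruct Hev as [delta [Hdelta Hev]].
    exists delta. split; auto. intros s Hs z Hz _.
    destruct (Hev s Hs) as [[HX HY] [[HZ HW] [Ht Hb]]].
    eapply Rle_lt_trans. apply (part2_pointwise n d X Y Z W s r rho z); auto; lra.
    fold d1 dn. assert (rho <= eps / (400 * d1 * dn)) by apply Rmin_r.
    assert (d1 * dn * rho <= d1 * dn * (eps / (400 * d1 * dn))) by (apply Rmult_le_compat_l; nra).
    replace (d1 * dn * (eps / (400 * d1 * dn))) with (eps / 400) in H0 by (field; lra).
    lra.
Qed.
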